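(* Let $G$ be a finite group with $Z(G)=I$, and suppose there is an integer $n_0\ge 3$ such that $l^i(D_1,\dots,D_n)\ge1$ for all class vectors $(D_1,\dots,D_n)$ of $G$ of length $n\in\{n_0,n_0+1,\dots,2n_0-1\}$. Then $$l^i(C_1,\dots,C_m)\ge |G|^{k-1}$$ for every class vector $(C_1,\dots,C_m)$ of $G$ of length $m=k\cdot n_0+l$ with $l\in\{0,1,\dots,n_0-1\}$ and $k\ge2$.
   Context: $I$ is the trivial group and $\iota$ the identity. A class vector of length $k$ is a tuple of $k$ non-trivial conjugacy classes. $\Sigma^i(C_1,\dots,C_k)$ is the set of $G$-conjugacy classes (simultaneous conjugation) of tuples $(\sigma_1,\dots,\sigma_k)$ with $\sigma_j\in C_j$, $\langle\sigma_1,\dots,\sigma_k\rangle=G$, $\sigma_1\cdots\sigma_k=\iota$, and $l^i(C_1,\dots,C_k)=|\Sigma^i(C_1,\dots,C_k)|$. *)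

(* Defs.v *)
From mathcomp Require Import all_boot all_fingroup all_solvable.
Set Implicit Arguments. Unset Strict Implicit. Unset Printing Implicit Defensive.
Local Open Scope group_scope.

Definition class_vector (gT : finGroupType) (G : {group gT}) (k : nat)
  (C : 'I_k -> {set gT}) : Prop :=
  forall j, C j \in classes G /\ C j != [1 gT].

Definition Sigma_tuples (gT : finGroupType) (G : {group gT}) (k : nat)
  (C : 'I_k -> {set gT}) : {set {ffun 'I_k -> gT}} :=
  [set s : {ffun 'I_k -> gT} |
     [&& [forall j, s j \in C j],
         <<[set s j | j : 'I_k]>> == G &
         \prod_(j < k) s j == 1]].

Definition tuple_conj (gT : finGroupType) (k : nat) (s : {ffun 'I_k -> gT})
  (g : gT) : {ffun 'I_k -> gT} := [ffun j => s j ^ g].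

Definition Sigma_i (gT : finGroupType) (G : {group gT}) (k : nat)
  (C : 'I_k -> {set gT}) : {set {set {ffun 'I_k -> gT}}} :=
  [set [set tuple_conj s g | g in G] | s in Sigma_tuples G C].

Definition l_i (gT : finGroupType) (G : {group gT}) (k : nat)
  (C : 'I_k -> {set gT}) : nat := #|Sigma_i G C|.

(* Main.v *)
Require Import Defs.
From mathcomp Require Import all_boot all_fingroup all_solvable.
Local Open Scope group_scope.
From mathcomp Require Import zify.

Section Aux.
Variables (gT : finGroupType) (G : {group gT}).

Definition conc n1 n2 (s1 : {ffun 'I_n1 -> gT}) (s2 : {ffun 'I_n2 -> gT}) :
  {ffun 'I_(n1 + n2) -> gT} :=
  [ffun i => match split i with inl a => s1 a | inr b => s2 b end].

Arguments conc {n1 n2}.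

Lemma concL n1 n2 s1 s2 a : @conc n1 n2 s1 s2 (lshift n2 a) = s1 a.
Proof. by rewrite ffunE (unsplitK (inl _ a)). Qed.

Lemma concR n1 n2 s1 s2 b : @conc n1 n2 s1 s2 (rshift n1 b) = s2 b.
Proof. by rewrite ffunE (unsplitK (inr _ b)). Qed.

Lemma prod_split n1 n2 (F : 'I_(n1 + n2) -> gT) :
  \prod_(i < n1 + n2) F i =
  (\prod_(i < n1) F (lshift n2 i)) * \prod_(i < n2) F (rshift n1 i).
Proof. exact: big_split_ord. Qed.

Lemma class_sub {C x} : C \in classes G -> x \in C -> x \in G.
Proof.
case/imsetP=> y yG -> /imsetP[h hG ->]; exact: groupJ.
Qed.

Lemma class_conj {C x g} : C \in classes G -> x \in C -> g \in G -> x ^ g \in C.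
Proof.
case/imsetP=> y yG -> /imsetP[h hG ->] gG.
by rewrite -conjgM memJ_class // groupM.
Qed.

Lemma concat_count n1 n2 (C : 'I_(n1 + n2) -> {set gT}) :
  (forall j, C j \in classes G) ->
  #|Sigma_tuples G (fun a => C (lshift n2 a))| *
  #|Sigma_tuples G (fun b => C (rshift n1 b))| <= #|Sigma_tuples G C|.
Proof.
move=> HC.
set A := Sigma_tuples _ _; set B := Sigma_tuples _ _.
rewrite -cardsX.
have inj : injective (fun p : {ffun 'I_n1 -> gT} * {ffun 'I_n2 -> gT} =>
                        conc p.1 p.2).
  move=> [p1 p2] [q1 q2] /= E; congr pair; apply/ffunP => x.
    by rewrite -(@concL _ _ p1 p2) E concL.
  by rewrite -(@concR _ _ p1 p2) E concR.
rewrite -(card_imset _ inj); apply: subset_leq_card.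
apply/subsetP => _ /imsetP[[s1 s2] /setXP[/= H1 H2] ->].
move: H1 H2; rewrite !inE => /and3P[/forallP F1 /eqP G1 /eqP P1]
  /and3P[/forallP F2 /eqP G2 /eqP P2].
have Fc : forall j, conc s1 s2 j \in C j.
  move=> j; rewrite -(splitK j); case: (split j) => [a|b] /=.
    by rewrite concL; exact: F1.
  by rewrite concR; exact: F2.
apply/and3P; split.
- by apply/forallP.
- rewrite eqEsubset; apply/andP; split.
    rewrite gen_subG; apply/subsetP => _ /imsetP[j _ ->].
    exact: (class_sub (HC j) (Fc j)).
  rewrite -{1}G1; apply: genS; apply/subsetP => _ /imsetP[a _ ->].
  by apply/imsetP; exists (lshift n2 a) => //; rewrite concL.
- rewrite prod_split.
  under eq_bigr do rewrite concL.
  under [X in _ * X]eq_bigr do rewrite concR.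
  by rewrite P1 P2 mulg1.
Qed.

Hypothesis ZG : 'Z(G) = 1.

Lemma tconj_inj {k} {s : {ffun 'I_k -> gT}} :
  <<[set s j | j : 'I_k]>> = G ->
  {in G &, injective (tuple_conj s)}.
Proof.
move=> Gs g h gG hG /ffunP E.
have x1 : g * h^-1 \in 'Z(G).
  apply/centerP; split; first by rewrite groupM ?groupV.
  have : g * h^-1 \in 'C([set s j | j : 'I_k]).
    apply/centP => _ /imsetP[j _ ->].
    apply/commute_sym/commgP/conjg_fixP.
    have := E j; rewrite !ffunE => Ej.
    by rewrite conjgM Ej conjgK.
  by rewrite -cent_gen Gs => /centP.
move: x1; rewrite ZG => /set1P /eqP; rewrite mulg_eq1 invgK => /eqP //.
Qed.

Lemma orbit_count k (C : 'I_k -> {set gT}) :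
  (forall j, C j \in classes G) ->
  (1 <= l_i G C)%N -> #|G| <= #|Sigma_tuples G C|.
Proof.
move=> HC; rewrite lt0n cards_eq0 => /set0Pn[O /imsetP[s Hs _]].
have Hs' := Hs; move: Hs'; rewrite inE => /and3P[/forallP Fs /eqP Gs /eqP Ps].
rewrite -(card_in_imset (tconj_inj Gs : {in G &, injective (tuple_conj s)})); apply: subset_leq_card.
apply/subsetP => _ /imsetP[g gG ->]; rewrite inE; apply/and3P; split.
- apply/forallP => j; rewrite ffunE; exact: class_conj.
- have -> : [set tuple_conj s g j | j : 'I_k] = [set s j | j : 'I_k] :^ g.
    rewrite /conjugate -imset_comp; apply: eq_imset => j; by rewrite /= ffunE.
  by rewrite genJ Gs conjGid.
- have -> : \prod_(j < k) tuple_conj s g j = (\prod_(j < k) s j) ^ g.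
    rewrite (big_morph (conjg^~ g) (fun x y => conjMg x y g) (conj1g g)).
    by apply: eq_bigr => j _; rewrite ffunE.
  by rewrite Ps conj1g.
Qed.

Lemma orbits_bound k (C : 'I_k -> {set gT}) :
  #|Sigma_tuples G C| <= l_i G C * #|G|.
Proof.
apply: (leq_trans (n := #|cover (Sigma_i G C)|)).
  apply: subset_leq_card; apply/subsetP => s Hs.
  apply/bigcupP; exists [set tuple_conj s g | g in G].
    by apply/imsetP; exists s.
  apply/imsetP; exists 1 => //; apply/ffunP => j; by rewrite ffunE conjg1.
apply: (leq_trans (leq_card_cover _).1).
rewrite /l_i -sum_nat_const; apply: leq_sum => _ /imsetP[s _ ->].
exact: leq_imset_card.
Qed.

End Aux.

Lemma blocks (gT : finGroupType) (G : {group gT}) (n0 : nat) :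
  'Z(G) = 1 -> (0 < n0)%N ->
  (forall (n : nat) (D : 'I_n -> {set gT}),
      (n0 <= n <= 2 * n0 - 1)%N -> class_vector G D -> (1 <= l_i G D)%N) ->
  forall k m l (C : 'I_m -> {set gT}), m = (k.+1 * n0 + l)%N ->
    (l <= n0 - 1)%N -> class_vector G C ->
    (#|G| ^ k.+1 <= #|Sigma_tuples G C|)%N.
Proof.
move=> ZG n0p H; elim=> [|k IH] m l C em hl cv.
  rewrite expn1; apply: orbit_count => //; first by move=> j; case: (cv j).
  apply: H => //; rewrite em mul1n leq_addr /=.
  lia.
have {}em : m = (n0 + (k.+1 * n0 + l))%N by rewrite em mulSn addnA.
subst m.
have HC : forall j, C j \in classes G by move=> j; case: (cv j).
apply: leq_trans (concat_count _ _ _ _ _ HC).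
rewrite expnS; apply: leq_mul.
  apply: orbit_count => //.
  apply: H; first by apply/andP; split=> //; lia.
  by move=> j; exact: cv.
apply: (IH _ l) => //; move=> j; exact: cv.
Qed.

Theorem proposition13 (gT : finGroupType) (G : {group gT}) (n0 : nat) :
  'Z(G) = 1 ->
  (3 <= n0)%N ->
  (forall (n : nat) (D : 'I_n -> {set gT}),
      (n0 <= n <= 2 * n0 - 1)%N -> class_vector G D -> (1 <= l_i G D)%N) ->
  forall (k l : nat) (C : 'I_(k * n0 + l) -> {set gT}),
    (l <= n0 - 1)%N -> (2 <= k)%N -> class_vector G C ->
    (#|G| ^ (k - 1) <= l_i G C)%N.
Proof.
move=> ZG n03 H [|[|k]] // l C hl _ cv.
have n0p : (0 < n0)%N by lia.
have B := @blocks _ _ _ ZG n0p H k.+1 _ l C (erefl _) hl cv.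
have G0 : (0 < #|G|)%N by apply/card_gt0P; exists 1; exact: group1.
rewrite subn1 /= -(leq_pmul2r G0) -expnSr.
exact: leq_trans B (orbits_bound _ _ _ C).
Qed.
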